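(* Let $\mathcal A=(a_{ij})_{0\le i,j\le2}$ and $\mathcal B=(b_{ij})_{0\le i,j\le 2}$ be symmetric $3\times3$ matrices whose 12 independent entries $a_{ij},b_{ij}$ ($i\le j$) are indeterminates, and let $p_0,q_0,p_1,q_1$ be further indeterminates. For $s,t$ put $\mathbf V(s,t)=(s^2,st,t^2)^T$, $\mathbf F(s,t)=(\mathcal A\mathbf V(s,t))\times(\mathcal B\mathbf V(s,t))$ (vector cross product) with components $F^{(1)},F^{(2)},F^{(3)}$, and $Q(s,t)=(F^{(2)}(s,t))^2-F^{(1)}(s,t)F^{(3)}(s,t)$. Define polynomials $p_n,q_n$ by $$p_{n+1}=q_{n-1}F^{(1)}(p_n,q_n)-p_{n-1}F^{(2)}(p_n,q_n),\qquad q_{n+1}=q_{n-1}F^{(2)}(p_n,q_n)-p_{n-1}F^{(3)}(p_n,q_n)\qquad(n\ge1),$$ and set $Q_n=Q(p_n,q_n)$. Then for every $n\ge1$, $Q_n$ divides $Q_{n+1}$ in the polynomial ring $\mathbb Z[a_{ij},b_{ij},p_0,q_0,p_1,q_1]$.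
   Context: This recurrence is the homogenisation ($u_n=p_n/q_n$) of the 12-parameter symmetric QRT map $u_{n+1}=\frac{f^{(1)}(u_n)-u_{n-1}f^{(2)}(u_n)}{f^{(2)}(u_n)-u_{n-1}f^{(3)}(u_n)}$ with $\mathbf f(u)=\mathbf F(u,1)$. *)

(* Defs.v *)
From HB Require Import structures.
From mathcomp Require Import all_boot all_order all_algebra.
From mathcomp Require Import mpoly.
Set Implicit Arguments. Unset Strict Implicit. Unset Printing Implicit Defensive.
Import GRing.Theory.
Local Open Scope ring_scope.

(* The ring Z[a_ij, b_ij (i<=j), p0, q0, p1, q1]: 16 indeterminates.
   Index convention:
     0..5   : a00 a01 a02 a11 a12 a22
     6..11  : b00 b01 b02 b11 b12 b22
     12..15 : p0 q0 p1 q1                                               *)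
Definition PR := {mpoly int[16]}.

Definition var (k : nat) : PR := 'X_(inord k).

Definition symidx (i j : nat) : nat :=
  let i' := minn i j in let j' := maxn i j in
  match i', j' with
  | 0, 0 => 0 | 0, 1 => 1 | 0, _ => 2
  | 1, 1 => 3 | 1, _ => 4 | _, _ => 5
  end%N.

Definition matA : 'M[PR]_3 := \matrix_(i < 3, j < 3) var (symidx i j).
Definition matB : 'M[PR]_3 := \matrix_(i < 3, j < 3) var (6 + symidx i j).

Definition p0 : PR := var 12.
Definition q0 : PR := var 13.
Definition p1 : PR := var 14.
Definition q1 : PR := var 15.

Definition Vst (s t : PR) : 'cV[PR]_3 :=
  \col_(i < 3) (if i == 0 :> nat then s ^+ 2 else if i == 1 :> nat then s * t else t ^+ 2).

Definition cross (u v : 'cV[PR]_3) : 'cV[PR]_3 :=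
  let u0 := u (inord 0) 0 in let u1 := u (inord 1) 0 in let u2 := u (inord 2) 0 in
  let v0 := v (inord 0) 0 in let v1 := v (inord 1) 0 in let v2 := v (inord 2) 0 in
  \col_(i < 3) (if i == 0 :> nat then u1 * v2 - u2 * v1
                else if i == 1 :> nat then u2 * v0 - u0 * v2
                else u0 * v1 - u1 * v0).

Definition Fst (s t : PR) : 'cV[PR]_3 := cross (matA *m Vst s t) (matB *m Vst s t).
Definition F1 (s t : PR) : PR := Fst s t (inord 0) 0.
Definition F2 (s t : PR) : PR := Fst s t (inord 1) 0.
Definition F3 (s t : PR) : PR := Fst s t (inord 2) 0.

Definition Qst (s t : PR) : PR := (F2 s t) ^+ 2 - F1 s t * F3 s t.

(* pqpair n = ((p_n, q_n), (p_{n+1}, q_{n+1})) *)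
Fixpoint pqpair (n : nat) : (PR * PR) * (PR * PR) :=
  match n with
  | 0 => ((p0, q0), (p1, q1))
  | S m =>
    let: ((pm, qm), (pn, qn)) := pqpair m in
    ((pn, qn),
     (qm * F1 pn qn - pm * F2 pn qn, qm * F2 pn qn - pm * F3 pn qn))
  end.

Definition p_ (n : nat) : PR := (pqpair n).1.1.
Definition q_ (n : nat) : PR := (pqpair n).1.2.

Definition Q_ (n : nat) : PR := Qst (p_ n) (q_ n).

(* Main.v *)
Require Import Defs.
From HB Require Import structures.
From mathcomp Require Import all_boot all_order all_algebra.
From mathcomp Require Import mpoly.
From mathcomp Require Import ring.
Set Implicit Arguments. Unset Strict Implicit. Unset Printing Implicit Defensive.
Import GRing.Theory.
Local Open Scope ring_scope.
Section Gen.
Variable R : comRingType.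
Implicit Types (a b : nat -> R).

Definition Lf a (k0 k1 k2 : nat) (X0 X1 X2 : R) := a k0 * X0 + a k1 * X1 + a k2 * X2.
Definition AV0 a X0 X1 X2 := Lf a 0 1 2 X0 X1 X2.
Definition AV1 a X0 X1 X2 := Lf a 1 3 4 X0 X1 X2.
Definition AV2 a X0 X1 X2 := Lf a 2 4 5 X0 X1 X2.
Definition GF0 a b X0 X1 X2 := AV1 a X0 X1 X2 * AV2 b X0 X1 X2 - AV2 a X0 X1 X2 * AV1 b X0 X1 X2.
Definition GF1 a b X0 X1 X2 := AV2 a X0 X1 X2 * AV0 b X0 X1 X2 - AV0 a X0 X1 X2 * AV2 b X0 X1 X2.
Definition GF2 a b X0 X1 X2 := AV0 a X0 X1 X2 * AV1 b X0 X1 X2 - AV1 a X0 X1 X2 * AV0 b X0 X1 X2.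
Definition GQ a b s t :=
  GF1 a b (s^+2) (s*t) (t^+2) ^+ 2 - GF0 a b (s^+2) (s*t) (t^+2) * GF2 a b (s^+2) (s*t) (t^+2).

Lemma orth (P0 P1 P2 R0 R1 R2 : R) :
  P0*(P1*R2 - P2*R1) + P1*(P2*R0 - P0*R2) + P2*(P0*R1 - P1*R0) = 0.
Proof. ring. Qed.

Lemma pi_id (P0 P1 P2 f0 f1 f2 x y : R) :
  P0*(y*f0 - x*f1)^+2 + P1*((y*f0 - x*f1)*(y*f1 - x*f2)) + P2*(y*f1 - x*f2)^+2 =
  (f0*y^+2 - f1*x*y*2 + f2*x^+2)*(P0*f0+P1*f1+P2*f2)
   + (f1^+2 - f0*f2)*(P0*x^+2 + P1*(x*y) + P2*y^+2).
Proof. ring. Qed.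

Lemma sym_id a (Z0 Z1 Z2 z0 z1 z2 : R) :
  AV0 a Z0 Z1 Z2 * z0 + AV1 a Z0 Z1 Z2 * z1 + AV2 a Z0 Z1 Z2 * z2 =
  AV0 a z0 z1 z2 * Z0 + AV1 a z0 z1 z2 * Z1 + AV2 a z0 z1 z2 * Z2.
Proof. rewrite /AV0 /AV1 /AV2 /Lf; ring. Qed.

Lemma fin0 (z0 z1 z2 a0 a1 a2 b0 b1 b2 E al be : R) :
  a0*z0 + a1*z1 + a2*z2 = E*al -> b0*z0+b1*z1+b2*z2 = E*be -> z1^+2 = z0*z2 ->
  exists R1, z0^+2*((a2*b0 - a0*b2)^+2 - (a1*b2 - a2*b1)*(a0*b1 - a1*b0)) = E*R1.
Proof.
move=> Ha Hb Hz.
set g0 := a1*b2 - a2*b1; set g1 := a2*b0 - a0*b2; set g2 := a0*b1 - a1*b0.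
have e2 : g0*z1 - g1*z0 = E*(al*b2 - be*a2).
  transitivity (b2*(a0*z0 + a1*z1 + a2*z2) - a2*(b0*z0+b1*z1+b2*z2)).
    rewrite /g0 /g1; ring.
  rewrite Ha Hb; ring.
have e1 : g2*z0 - g0*z2 = E*(al*b1 - be*a1).
  transitivity (b1*(a0*z0 + a1*z1 + a2*z2) - a1*(b0*z0+b1*z1+b2*z2)).
    rewrite /g0 /g2; ring.
  rewrite Ha Hb; ring.
set h1 := al*b1 - be*a1; set h2 := al*b2 - be*a2.
exists (- (g0*z1*h2*2) + E*h2^+2 - g0*z0*h1).
have -> : z0^+2*(g1^+2 - g0*g2) = (g1*z0)^+2 - g0*z0*(g2*z0) by ring.
have -> : g1*z0 = g0*z1 - E*h2 by rewrite -e2; ring.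
have -> : g2*z0 = g0*z2 + E*h1 by rewrite -e1; ring.
transitivity (g0^+2*(z1^+2 - z0*z2) + E*(- (g0*z1*h2*2) + E*h2^+2 - g0*z0*h1)).
  ring.
rewrite Hz; ring.
Qed.

Lemma fin2 (z0 z1 z2 a0 a1 a2 b0 b1 b2 E al be : R) :
  a0*z0 + a1*z1 + a2*z2 = E*al -> b0*z0+b1*z1+b2*z2 = E*be -> z1^+2 = z0*z2 ->
  exists R1, z2^+2*((a2*b0 - a0*b2)^+2 - (a1*b2 - a2*b1)*(a0*b1 - a1*b0)) = E*R1.
Proof.
move=> Ha Hb Hz.
have [R1 HR] := @fin0 z2 z1 z0 a2 a1 a0 b2 b1 b0 E al be
  ltac:(by rewrite -Ha; ring) ltac:(by rewrite -Hb; ring) ltac:(by rewrite Hz; ring).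
by exists R1; rewrite -HR; ring.
Qed.

Lemma gen_main a b s t x y :
  let f0 := GF0 a b (s^+2) (s*t) (t^+2) in
  let f1 := GF1 a b (s^+2) (s*t) (t^+2) in
  let f2 := GF2 a b (s^+2) (s*t) (t^+2) in
  (exists R1, (s^+2)^+2 * GQ a b (y*f0 - x*f1) (y*f1 - x*f2) = GQ a b s t * R1) /\
  (exists R1, (t^+2)^+2 * GQ a b (y*f0 - x*f1) (y*f1 - x*f2) = GQ a b s t * R1).
Proof.
move=> f0 f1 f2.
set w0 := y*f0 - x*f1; set w1 := y*f1 - x*f2.
have dot : forall c, let P0 := AV0 c (s^+2) (s*t) (t^+2) in
   let P1 := AV1 c (s^+2) (s*t) (t^+2) in let P2 := AV2 c (s^+2) (s*t) (t^+2) in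
   P0*f0+P1*f1+P2*f2 = 0 ->
   AV0 c (w0^+2) (w0*w1) (w1^+2) * s^+2 + AV1 c (w0^+2) (w0*w1) (w1^+2) * (s*t)
   + AV2 c (w0^+2) (w0*w1) (w1^+2) * t^+2
   = GQ a b s t * (P0*x^+2 + P1*(x*y) + P2*y^+2).
  move=> c P0 P1 P2 H0.
  rewrite sym_id -/P0 -/P1 -/P2.
  rewrite /w0 /w1 pi_id H0 mulr0 add0r.
  by rewrite /GQ -/f0 -/f1 -/f2.
have Ha := dot a (orth _ _ _ _ _ _).
have Hb : forall P0 P1 P2 R0 R1 R2, P0*(R1*P2 - R2*P1) + P1*(R2*P0 - R0*P2) + P2*(R0*P1 - R1*P0) = 0 :> R.
  by move=> *; ring.
have Hb' := dot b (Hb _ _ _ _ _ _).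
have Hz : (s*t)^+2 = s^+2 * t^+2 by ring.
split.
  have [R1 HR] := fin0 Ha Hb' Hz.
  by exists R1; rewrite -HR.
have [R1 HR] := fin2 Ha Hb' Hz.
by exists R1; rewrite -HR.
Qed.
End Gen.
Definition va (k : nat) : PR := var (k %% 6).
Definition vb (k : nat) : PR := var (6 + k %% 6).

Lemma i0 : (inord 0 : 'I_3) = ord0. Proof. by apply: val_inj; rewrite /= inordK. Qed.
Lemma i1 : (inord 1 : 'I_3) = Ordinal (isT : (1 < 3)%N). Proof. by apply: val_inj; rewrite /= inordK. Qed.
Lemma i2 : (inord 2 : 'I_3) = Ordinal (isT : (2 < 3)%N). Proof. by apply: val_inj; rewrite /= inordK. Qed.

Lemma AVE (M : 'M[PR]_3) s t i : (M *m Vst s t) i 0 =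
  M i ord0 * s^+2 + M i (Ordinal (isT : (1 < 3)%N)) * (s*t) + M i (Ordinal (isT : (2 < 3)%N)) * t^+2.
Proof.
rewrite !mxE !big_ord_recr big_ord0 /= !mxE /= add0r.
by congr (M i _ * _ + M i _ * _ + M i _ * _); apply: val_inj.
Qed.

Lemma F1E s t : F1 s t = GF0 va vb (s^+2) (s*t) (t^+2).
Proof. by rewrite /F1 /Fst /cross mxE i0 i1 i2 /= !AVE !mxE. Qed.
Lemma F2E s t : F2 s t = GF1 va vb (s^+2) (s*t) (t^+2).
Proof. by rewrite /F2 /Fst /cross mxE i0 i1 i2 /= !AVE !mxE. Qed.
Lemma F3E s t : F3 s t = GF2 va vb (s^+2) (s*t) (t^+2).
Proof. by rewrite /F3 /Fst /cross mxE i0 i1 i2 /= !AVE !mxE. Qed.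
Lemma QE s t : Qst s t = GQ va vb s t.
Proof. by rewrite /Qst F1E F2E F3E. Qed.

Section Morph.
Variables (R S : comRingType) (f : {rmorphism R -> S}).
Lemma LfM a k0 k1 k2 X0 X1 X2 : f (Lf a k0 k1 k2 X0 X1 X2) = Lf (f \o a) k0 k1 k2 (f X0) (f X1) (f X2).
Proof. by rewrite /Lf !rmorphD !rmorphM. Qed.
Lemma GF0M a b X0 X1 X2 : f (GF0 a b X0 X1 X2) = GF0 (f \o a) (f \o b) (f X0) (f X1) (f X2).
Proof. by rewrite /GF0 /AV0 /AV1 /AV2 !rmorphB !rmorphM !LfM. Qed.
Lemma GF1M a b X0 X1 X2 : f (GF1 a b X0 X1 X2) = GF1 (f \o a) (f \o b) (f X0) (f X1) (f X2).
Proof. by rewrite /GF1 /AV0 /AV1 /AV2 !rmorphB !rmorphM !LfM. Qed.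
Lemma GF2M a b X0 X1 X2 : f (GF2 a b X0 X1 X2) = GF2 (f \o a) (f \o b) (f X0) (f X1) (f X2).
Proof. by rewrite /GF2 /AV0 /AV1 /AV2 !rmorphB !rmorphM !LfM. Qed.
Lemma GQM a b s t : f (GQ a b s t) = GQ (f \o a) (f \o b) (f s) (f t).
Proof. by rewrite /GQ rmorphB rmorphXn rmorphM GF0M GF1M GF2M !rmorphXn rmorphM. Qed.
End Morph.

Section Ext.
Variable R : comRingType.
Variables (a a' b b' : nat -> R).
Hypotheses (Ha : forall k, a k = a' k) (Hb : forall k, b k = b' k).
Lemma GF0ext X0 X1 X2 : GF0 a b X0 X1 X2 = GF0 a' b' X0 X1 X2.
Proof. by rewrite /GF0 /AV0 /AV1 /AV2 /Lf !Ha !Hb. Qed.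
Lemma GF1ext X0 X1 X2 : GF1 a b X0 X1 X2 = GF1 a' b' X0 X1 X2.
Proof. by rewrite /GF1 /AV0 /AV1 /AV2 /Lf !Ha !Hb. Qed.
Lemma GF2ext X0 X1 X2 : GF2 a b X0 X1 X2 = GF2 a' b' X0 X1 X2.
Proof. by rewrite /GF2 /AV0 /AV1 /AV2 /Lf !Ha !Hb. Qed.
Lemma GQext s t : GQ a b s t = GQ a' b' s t.
Proof. by rewrite /GQ GF0ext GF1ext GF2ext. Qed.
End Ext.

Lemma pq_shift m : (pqpair m.+1).1 = (pqpair m).2.
Proof. by rewrite /=; case: (pqpair m) => [[? ?] [? ?]]. Qed.

Lemma pq_step m :
  p_ m.+2 = q_ m * F1 (p_ m.+1) (q_ m.+1) - p_ m * F2 (p_ m.+1) (q_ m.+1) /\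
  q_ m.+2 = q_ m * F2 (p_ m.+1) (q_ m.+1) - p_ m * F3 (p_ m.+1) (q_ m.+1).
Proof.
rewrite /p_ /q_ !pq_shift /=.
by case: (pqpair m) => [[? ?] [? ?]].
Qed.

Definition i14 : 'I_16 := inord 14.
Notation zeta := (comp_mpoly [tuple (if i == i14 then 0 else 'X_i : PR) | i < 16]).

Lemma compX (h : 'I_16 -> PR) i : comp_mpoly [tuple h j | j < 16] 'X_i = h i.
Proof. by rewrite comp_mpolyXU -tnth_nth tnth_mktuple. Qed.

Lemma X_neq0 (i : 'I_16) : ('X_i : PR) != 0.
Proof.
apply/negP => /eqP H.
have := congr1 (meval (fun _ => 1%R : int)) H.
by rewrite mevalXU meval0.
Qed.

Lemma zeta_fact (r : PR) : exists r', r = zeta r + 'X_i14 * r'.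
Proof.
elim/mpolyind: r => [|c m p _ _ [r' Hr]].
  by exists 0; rewrite raddf0 mulr0 addr0.
rewrite raddfD /= comp_mpolyZ comp_mpolyX.
under eq_bigr => i _ do rewrite tnth_mktuple.
case Hm: (m i14) => [|k].
  exists r'.
  have -> : \prod_(i < 16) (if i == i14 then 0 else 'X_i) ^+ m i = 'X_[m] :> PR.
    rewrite mpolyXE_id; apply: eq_bigr => i _.
    by case: eqP => // ->; rewrite Hm !expr0.
  by rewrite {1}Hr addrA.
exists (c *: ('X_i14 ^+ k * \prod_(i < 16 | i != i14) 'X_i ^+ m i) + r').
rewrite (bigD1 i14) //= eqxx Hm expr0n /= mul0r scaler0 add0r.
rewrite {1}mpolyXE_id (bigD1 i14) //= Hm exprS -mulrA {1}Hr.
rewrite mulrDr -scalerAr; set u := c *: _; set v := 'X_i14 * r'.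
by rewrite addrCA.
Qed.

Definition i15 : 'I_16 := inord 15.
Lemma i15_neq : (i15 == i14) = false.
Proof. by rewrite -val_eqE /= !inordK. Qed.

Lemma zetaX14 : zeta 'X_i14 = 0.
Proof. by rewrite compX eqxx. Qed.
Lemma zetaX15 : zeta 'X_i15 = 'X_i15.
Proof. by rewrite compX i15_neq. Qed.

Lemma cancel_s k : forall r1 r2 : PR, 'X_i15 ^+ 4 * r1 = 'X_i14 ^+ k * r2 ->
  exists r, r1 = 'X_i14 ^+ k * r.
Proof.
elim: k => [|k IH] r1 r2 H; first by exists r1; rewrite expr0 mul1r.
have Hz : zeta r1 = 0.
  have := congr1 zeta H.
  rewrite [in LHS]rmorphM [in RHS]rmorphM !rmorphXn /= zetaX14 zetaX15 expr0n /= mul0r => /eqP.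
  by rewrite mulf_eq0 expf_eq0 /= (negbTE (X_neq0 _)) => /eqP.
have [r' Hr] := zeta_fact r1.
rewrite Hz add0r in Hr.
move: H; rewrite Hr mulrCA [in RHS]exprS -[in RHS]mulrA => H; have {}H := mulfI (X_neq0 i14) H.
have [r Hr'] := IH _ _ H.
by exists r; rewrite Hr' exprS mulrA.
Qed.

Definition vpt (i : 'I_16) : int :=
  if [|| (nat_of_ord i == 2)%N, (nat_of_ord i == 6)%N | (nat_of_ord i == 14)%N] then 1 else 0.

Lemma E_neq0 : GQ va vb p1 q1 != 0.
Proof.
apply/negP => /eqP H.
have := congr1 (meval vpt) H.
rewrite GQM meval0 /GQ /GF0 /GF1 /GF2 /AV0 /AV1 /AV2 /Lf /= /va /vb /p1 /q1 /var !mevalXU /vpt.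
by rewrite !inordK.
Qed.

Lemma base : exists r, GQ va vb (q0 * F1 p1 q1 - p0 * F2 p1 q1) (q0 * F2 p1 q1 - p0 * F3 p1 q1)
  = r * GQ va vb p1 q1.
Proof.
rewrite F1E F2E F3E.
have [[R1 H1] [R2 H2]] := gen_main va vb p1 q1 p0 q0.
set K := GQ va vb _ _ in H1 H2 *.
set E := GQ va vb p1 q1 in H1 H2 *.
rewrite -exprM in H1; rewrite -exprM in H2.
change (p1 ^+ 4 * K = E * R1) in H1. change (q1 ^+ 4 * K = E * R2) in H2.
have H : q1 ^+ 4 * R1 = p1 ^+ 4 * R2.
  apply: (mulfI E_neq0).
  rewrite -/E [LHS]mulrCA -H1 [RHS]mulrCA -H2.
  by rewrite mulrCA.
have [r Hr] := cancel_s H.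
exists r; apply: (@mulfI _ (p1 ^+ 4) (expf_neq0 4 (X_neq0 i14))).
by rewrite H1 Hr mulrCA (mulrC r).
Qed.

Section FixM.
Variable f : {rmorphism PR -> PR}.
Hypothesis Hf : forall j, (j < 12)%N -> f (var j) = var j.
Lemma fva k : (f \o va) k = va k.
Proof. by rewrite /= /va Hf // (leq_trans (ltn_pmod _ _)). Qed.
Lemma fvb k : (f \o vb) k = vb k.
Proof. by rewrite /= /vb Hf // ltn_add2l ltn_pmod. Qed.
Lemma F1M s t : f (F1 s t) = F1 (f s) (f t).
Proof. by rewrite !F1E GF0M (GF0ext fva fvb) !rmorphXn rmorphM. Qed.
Lemma F2M s t : f (F2 s t) = F2 (f s) (f t).
Proof. by rewrite !F2E GF1M (GF1ext fva fvb) !rmorphXn rmorphM. Qed.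
Lemma F3M s t : f (F3 s t) = F3 (f s) (f t).
Proof. by rewrite !F3E GF2M (GF2ext fva fvb) !rmorphXn rmorphM. Qed.
Lemma QM s t : f (Qst s t) = Qst (f s) (f t).
Proof. by rewrite !QE GQM (GQext fva fvb). Qed.
End FixM.

Definition hm (m : nat) (i : 'I_16) : PR :=
  if (nat_of_ord i == 12)%N then p_ m else if (nat_of_ord i == 13)%N then q_ m
  else if (nat_of_ord i == 14)%N then p_ m.+1 else if (nat_of_ord i == 15)%N then q_ m.+1
  else 'X_i.

Notation phim m := (comp_mpoly [tuple hm m i | i < 16]).

Theorem theorem7 (n : nat) : (1 <= n)%N -> exists r : PR, Q_ n.+1 = r * Q_ n.
Proof.
case: n => [//|m] _.
have Hf : forall j, (j < 12)%N -> phim m (var j) = var j.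
  move=> j hj; rewrite /var compX /hm inordK ?(leq_trans hj) //.
  by rewrite !ifN_eq // neq_ltn (leq_trans hj) ?orbT.
have [r Hr] := base.
rewrite -!QE in Hr.
have := congr1 (phim m) Hr.
rewrite rmorphM !(QM Hf) rmorphB rmorphB !rmorphM !(F1M Hf) !(F2M Hf) !(F3M Hf).
have e12 : phim m p0 = p_ m by rewrite /p0 /var compX /hm inordK.
have e13 : phim m q0 = q_ m by rewrite /q0 /var compX /hm inordK.
have e14 : phim m p1 = p_ m.+1 by rewrite /p1 /var compX /hm inordK.
have e15 : phim m q1 = q_ m.+1 by rewrite /q1 /var compX /hm inordK.
rewrite /= e12 e13 e14 e15 => H.
exists (phim m r).
rewrite /Q_; case: (pq_step m) => -> ->.
exact: H.
Qed.
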